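(* Let $S$ be an additively cancellative semiring with $1\neq 0$ and let $n\geq 2$. Then neither the semiring $M_n(S)$ of all $n\times n$ matrices over $S$ nor the semiring $T_n(S)$ of all upper triangular $n\times n$ matrices over $S$ is centrally essential.
   Context: A semiring is a set $S$ with two binary operations $+$ and $\cdot$ such that $(S,+)$ is a commutative monoid with neutral element $0$, $(S,\cdot)$ is a monoid with identity $1$, multiplication distributes over addition on both sides, and $0s=s0=0$ for all $s\in S$. $M_n(S)$ and $T_n(S)$ carry the usual matrix addition and multiplication. The center is $C(R)=\{r\in R: rr'=r'r \text{ for all } r'\in R\}$. A semiring $R$ is centrally essential if for every non-zero $x\in R$ there exist non-zero $y,z\in C(R)$ with $xy=z$. $S$ is additively cancellative if $x+z=y+z$ implies $x=y$. *)

(* Defs.v *)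
From HB Require Import structures.
From mathcomp Require Import all_boot all_order all_algebra.
Set Implicit Arguments. Unset Strict Implicit. Unset Printing Implicit Defensive.
Import GRing.Theory.
Local Open Scope ring_scope.

(* Centrally essential, for the subsemiring of R carved out by a predicate P
   (closed under the semiring operations, with the operations of R). *)
Definition center_in (R : pzSemiRingType) (P : pred R) (c : R) : Prop :=
  P c /\ forall r, P r -> c * r = r * c.

Definition centrally_essential_in (R : pzSemiRingType) (P : pred R) : Prop :=
  forall x, P x -> x != 0 ->
    exists y z, [/\ center_in P y, center_in P z, y != 0, z != 0 & x * y = z].

Definition centrally_essential (R : pzSemiRingType) : Prop :=
  centrally_essential_in (@predT R).

Definition add_cancellative (S : pzSemiRingType) : Prop :=
  forall x y z : S, x + z = y + z -> x = y.

Definition upper_triangular (S : pzSemiRingType) (n : nat) : pred 'M[S]_n :=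
  fun A => [forall i : 'I_n, forall j : 'I_n, (j < i)%N ==> (A i j == 0)].

(* Main.v *)
Require Import Defs.
From mathcomp Require Import all_boot all_order all_algebra.
Local Open Scope ring_scope.
Import GRing.Theory.

Lemma mul_delta_r (S : pzSemiRingType) n (A : 'M[S]_n) (i j k l : 'I_n) :
  (A *m delta_mx i j) k l = if l == j then A k i else 0.
Proof.
rewrite mxE (bigD1 i) //= mxE eqxx /= big1 ?addr0.
  by case: (l == j); rewrite /= ?mulr1 ?mulr0.
by move=> t /negPf Ht; rewrite mxE Ht /= mulr0.
Qed.

Lemma mul_delta_l (S : pzSemiRingType) n (A : 'M[S]_n) (i j k l : 'I_n) :
  (delta_mx i j *m A) k l = if k == i then A j l else 0.
Proof.
rewrite mxE (bigD1 j) //= mxE eqxx andbT big1 ?addr0.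
  by case: (k == i); rewrite /= ?mul1r ?mul0r.
by move=> t /negPf Ht; rewrite mxE Ht andbF mul0r.
Qed.

Lemma not_ce (S : pzSemiRingType) n (P : pred 'M[S]_n) (o l : 'I_n) :
  (1 : S) != 0 -> o != l -> (forall k, P (delta_mx k k)) ->
  (forall j, P (delta_mx o j)) ->
  ~ centrally_essential_in P.
Proof.
move=> one0 ol Pd Po H.
have x0 : delta_mx o l != 0 :> 'M[S]_n.
  apply/eqP => /matrixP /(_ o l); rewrite !mxE !eqxx /=.
  by move/eqP; rewrite (negPf one0).
have [y [z [[Py Cy] [Pz Cz] y0 z0 E]]] := H _ (Po l) x0.
have offd : forall i k, i != k -> y i k = 0.
  move=> i k ik.
  have := congr1 (fun M : 'M[S]_n => M i k) (Cy _ (Pd k)).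
  by rewrite /= -!mulmxE mul_delta_r mul_delta_l eqxx (negPf ik).
have diag : forall j, y j j = y o o.
  move=> j.
  have := congr1 (fun M : 'M[S]_n => M o j) (Cy _ (Po j)).
  by rewrite /= -!mulmxE mul_delta_r mul_delta_l !eqxx.
have yll : y l l = 0.
  have := congr1 (fun M : 'M[S]_n => M o l) (Cz _ (Pd l)).
  rewrite /= -!mulmxE mul_delta_r mul_delta_l eqxx (negPf ol) -E.
  by rewrite -mulmxE mul_delta_l eqxx.
apply/(negP y0)/eqP/matrixP => i k; rewrite mxE.
case: (eqVneq i k) => [->|ik]; last exact: offd.
by rewrite diag -(diag l) yll.
Qed.

Theorem corollary2p4 (S : pzSemiRingType) (n : nat) :
  add_cancellative S -> (1 : S) != 0 -> (2 <= n)%N ->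
  ~ @centrally_essential 'M[S]_n /\
  ~ centrally_essential_in (@upper_triangular S n).
Proof.
move=> _ one0; case: n => [|[|m]] // _.
have ol : (ord0 : 'I_m.+2) != ord_max by [].
split.
  exact: (@not_ce S _ predT _ _ one0 ol).
apply: (@not_ce S _ (@upper_triangular S m.+2) _ _ one0 ol) => [k|j]; apply/forallP => a; apply/forallP => b;
  apply/implyP => ba; rewrite mxE.
  by case: (eqVneq a k) => [ak|] //=; case: (eqVneq b k) => // bk;
    move: ba; rewrite ak bk ltnn.
by case: (eqVneq a ord0) => [a0|] //=; move: ba; rewrite a0.
Qed.
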